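(* If $q$ is a power of an odd prime, then the graph $G_q$ is isomorphic to an induced subgraph of $ER_q$.
   Context: For a power $q$ of an odd prime, let $A=\{(a,a^2):a\in\mathbb{F}_q\}\subset\mathbb{F}_q^2$. The graph $G_q$ has vertex set $\mathbb{F}_q\times\mathbb{F}_q$, and distinct vertices $(x_1,x_2)$ and $(y_1,y_2)$ are adjacent if and only if $(x_1,x_2)+(y_1,y_2)\in A$ (equivalently $(x_1+y_1)^2=x_2+y_2$); $G_q$ has no loops. $ER_q$ is the graph whose vertices are the points of $PG(2,q)$, i.e. the $1$-dimensional subspaces of $\mathbb{F}_q^3$, where distinct vertices $(x_0,x_1,x_2)$ and $(y_0,y_1,y_2)$ (homogeneous coordinates) are adjacent if and only if $x_0y_0+x_1y_1+x_2y_2=0$. *)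

(* Defs.v *)
From HB Require Import structures.
From mathcomp Require Import all_boot all_order all_algebra all_fingroup all_field.
Set Implicit Arguments. Unset Strict Implicit. Unset Printing Implicit Defensive.
Import GRing.Theory.
Local Open Scope ring_scope.

Definition Gq_adj (F : finFieldType) (x y : F * F) : bool :=
  (x != y) && ((x.1 + y.1) ^+ 2 == x.2 + y.2).

Definition dot3 (F : fieldType) (u v : 'rV[F]_3) : F :=
  \sum_(i < 3) u 0 i * v 0 i.

(* Points of PG(2,q): 1-dimensional subspaces of F^3. *)
Definition is_point (F : fieldType) (U : {vspace 'rV[F]_3}) : Prop :=
  \dim U = 1%N.

(* ER_q adjacency between points U, V: distinct, and orthogonal
   (every vector of U is orthogonal to every vector of V; for 1-dim
   subspaces this is orthogonality of homogeneous coordinates). *)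
Definition ER_adj (F : fieldType) (U V : {vspace 'rV[F]_3}) : Prop :=
  U <> V /\ forall u v, u \in U -> v \in V -> dot3 u v = 0.

(* Main.v *)
Require Import Defs.
From HB Require Import structures.
From mathcomp Require Import all_boot all_order all_algebra all_fingroup all_field.
Local Open Scope ring_scope.
From mathcomp Require Import ring zify.
Set Implicit Arguments. Unset Strict Implicit. Unset Printing Implicit Defensive.
Import GRing.Theory.
Section S.
Variable F : finFieldType.

Lemma sum_sq (h2 : (2%:R : F) != 0) : exists a b : F, a ^+ 2 + b ^+ 2 = -1.
Proof.
pose S := [set x ^+ 2 | x in predT] : {set F}.
have fib (j : F) : (\sum_(i : F | i ^+ 2 == j) 1 <= 2)%N.
  rewrite sum1_card.
  case: (pickP [pred i : F | i ^+ 2 == j]) => [x0 /eqP hx0|h0].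
    have sub : [pred i : F | i ^+ 2 == j] \subset [set x0; -x0].
      apply/subsetP => y /eqP hy; rewrite !inE.
      by rewrite -eqf_sqr hy hx0.
    apply: (leq_trans (subset_leq_card sub)).
    by rewrite cards2; case: (_ != _).
  by rewrite (eq_card0 h0).
have fib0 : (\sum_(i : F | i ^+ 2 == 0%R) 1 = 1)%N.
  rewrite sum1_card (@eq_card1 _ 0) // => y.
  rewrite -topredE /=; change ((y ^+ 2 == 0) = (y == 0)); exact: sqrf_eq0.
have S0 : (0 : F) \in S by apply/imsetP; exists 0 => //; rewrite expr0n.
have cardF : #|F| = (\sum_(j in S) \sum_(i in predT | i ^+ 2 == j) 1)%N.
  by rewrite -(partition_big_imset (fun x : F => x ^+ 2) predT (fun _ => 1%N)) sum1_card.
rewrite (bigD1 0) //= fib0 in cardF.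
pose N := (\sum_(j in S | j != 0%R) 1)%N.
have cardS : #|S| = N.+1.
  by rewrite -sum1_card (bigD1 0) //= add1n.
have leF : (#|F| <= 1 + (N + N))%N.
  rewrite cardF leq_add2l -big_split /=.
  by apply: leq_sum => j _; exact: fib.
pose T := [set -1 - x | x in S].
have cardT : #|T| = #|S|.
  by apply: card_imset => x y /addrI /oppr_inj.
case: (set_0Vmem (S :&: T)) => [hST | [z]].
  have := max_card (mem (S :|: T)).
  rewrite cardsU hST cards0 subn0 cardT cardS => h.
  exfalso; move: (leq_trans h leF); lia.
rewrite inE => /andP[/imsetP[a _ ha] /imsetP[w /imsetP[b _ hb] hw]].
exists a, b; rewrite -ha hw hb; ring.
Qed.

Definition vec (c0 c1 c2 : F) : 'rV[F]_3 := \row_(i < 3) [:: c0; c1; c2]`_i.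

Lemma dot3E c0 c1 c2 d0 d1 d2 :
  dot3 (vec c0 c1 c2) (vec d0 d1 d2) = c0 * d0 + c1 * d1 + c2 * d2.
Proof. by rewrite /dot3 !big_ord_recr big_ord0 /= !mxE /= add0r. Qed.

Lemma dot3Zl k (u v : 'rV[F]_3) : dot3 (k *: u) v = k * dot3 u v.
Proof.
rewrite /dot3 big_distrr /=; apply: eq_bigr => i _; by rewrite mxE mulrA.
Qed.

Lemma dot3C (u v : 'rV[F]_3) : dot3 u v = dot3 v u.
Proof. by rewrite /dot3; apply: eq_bigr => i _; rewrite mulrC. Qed.

Lemma dot3Zr k (u v : 'rV[F]_3) : dot3 u (k *: v) = k * dot3 u v.
Proof. by rewrite dot3C dot3Zl dot3C. Qed.

Lemma dot30 (v : 'rV[F]_3) : dot3 0 v = 0.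
Proof. by rewrite -(scale0r 0) dot3Zl mul0r. Qed.

Variables a b : F.
Hypothesis hab : a ^+ 2 + b ^+ 2 = -1.

Let hS1 : a ^+ 2 + b ^+ 2 + 1 = 0.
Proof. by rewrite hab addNr. Qed.

Definition AA (x : F * F) := x.1 ^+ 2 - x.2.
Definition uu (x : F * F) :=
  vec (4 - AA x) (4 * a + 4 * x.1 * b + AA x * a) (4 * b - 4 * x.1 * a + AA x * b).
Definition Q0 := vec 1 (-a) (-b).
Definition RR := vec 0 b (-a).
Definition PP := vec 1 a b.

Lemma zero_of (e K : F) : e = (a ^+ 2 + b ^+ 2 + 1) * K -> e = 0.
Proof. by rewrite hS1 mul0r. Qed.

Lemma dot_uu x y : dot3 (uu x) (uu y) = -8 * ((x.1 + y.1) ^+ 2 - x.2 - y.2).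
Proof.
apply/eqP; rewrite -subr_eq0; apply/eqP; apply: (@zero_of _
  (16 + 4 * AA x + 4 * AA y + AA x * AA y + 16 * x.1 * y.1)).
rewrite dot3E /AA; ring.
Qed.

Lemma dot_uQ x : dot3 (uu x) Q0 = 8.
Proof.
apply/eqP; rewrite -subr_eq0; apply/eqP; apply: (@zero_of _ (- (4 + AA x))).
rewrite dot3E /AA; ring.
Qed.

Lemma dot_uR x : dot3 (uu x) RR = - (4 * x.1).
Proof.
apply/eqP; rewrite -subr_eq0; apply/eqP; apply: (@zero_of _ (4 * x.1)).
rewrite dot3E; ring.
Qed.

Lemma dot_uP x : dot3 (uu x) PP = - (2 * AA x).
Proof.
apply/eqP; rewrite -subr_eq0; apply/eqP; apply: (@zero_of _ (4 + AA x)).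
rewrite dot3E /AA; ring.
Qed.

End S.

Lemma pow2_neq0 (p : nat) (F : finFieldType) :
  prime p -> odd p -> p \in [pchar F] -> forall k, ((2 ^ k)%N%:R : F) != 0.
Proof.
move=> pp op hc k; rewrite -(dvdn_pcharf hc).
case: k => [|k]; first by rewrite expn0 dvdn1; apply/eqP => e; rewrite e in pp.
rewrite Euclid_dvdX // andbT dvdn_prime2 //; apply/eqP => e; by rewrite e in op.
Qed.

Theorem theorem1p4 (p : nat) (F : finFieldType) :
  prime p -> odd p -> p \in [pchar F] ->
  exists f : F * F -> {vspace 'rV[F]_3},
    (forall x, is_point (f x)) /\
    injective f /\
    (forall x y, Gq_adj x y <-> ER_adj (f x) (f y)).
Proof.
move=> pp op hc.
have h2 : (2 : F) != 0 by have := pow2_neq0 pp op hc 1.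
have h4 : (4 : F) != 0 by have := pow2_neq0 pp op hc 2.
have h8 : (8 : F) != 0 by have := pow2_neq0 pp op hc 3.
have [a [b hab]] := sum_sq h2.
exists (fun x => <[uu a b x]>%VS).
have nz x : uu a b x != 0.
  apply/eqP => e; move: (dot_uQ hab x); rewrite e dot30 => e8.
  by move: h8; rewrite -e8 eqxx.
have inj : injective (fun x => <[uu a b x]>%VS).
  move=> x y /= e.
  have : uu a b x \in <[uu a b y]>%VS by rewrite -e memv_line.
  case/vlineP => k ek.
  have k1 : k = 1.
    move: (dot_uQ hab x); rewrite ek dot3Zl (dot_uQ hab y) => /eqP.
    rewrite -subr_eq0 -{2}(mul1r 8) -mulrBl mulf_eq0 (negbTE h8) orbF subr_eq0.
    by move/eqP.
  rewrite k1 scale1r in ek.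
  have e1 : x.1 = y.1.
    move: (dot_uR hab x); rewrite ek (dot_uR hab y) => /oppr_inj /(mulfI h4).
    by [].
  have e2 : AA x = AA y.
    move: (dot_uP hab x); rewrite ek (dot_uP hab y) => /oppr_inj /(mulfI h2).
    by [].
  move: e2; rewrite /AA e1 => /addrI /oppr_inj e2.
  by case: x y e1 e2 {ek e} => [x1 x2] [y1 y2] /= -> ->.
split; first by move=> x; rewrite /is_point dim_vline nz.
split; first exact: inj.
move=> x y; rewrite /Gq_adj /ER_adj; split.
  case/andP => nxy /eqP E; split.
    by move=> e; move: nxy; rewrite (inj _ _ e) eqxx.
  move=> u v /vlineP[k ->] /vlineP[l ->].
  by rewrite dot3Zl dot3Zr (dot_uu hab) -addrA -opprD -E subrr !mulr0.
case=> nf H; apply/andP; split.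
  by apply/eqP => e; apply: nf; rewrite e.
have := H _ _ (memv_line (uu a b x)) (memv_line (uu a b y)).
rewrite (dot_uu hab) => /eqP; rewrite mulf_eq0 oppr_eq0 (negbTE h8) /= subr_eq0.
by rewrite subr_eq [y.2 + _]addrC.
Qed.
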